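(* Let $K$ be a field and $K[x,x^{-1}]$ the Laurent polynomial algebra, with involution ${}^\natural$ on $\mathbb{M}_2(K[x,x^{-1}])$ given by $\big((f_{ij}(x))\big)^\natural=(f_{ji}(x^{-1}))$. Let $\mathbf{K}_{\mathbb{M}_2(K[x,x^{-1}])}=\{X: X^\natural=-X\}$. Then: (1) If $\mathrm{char}(K)=2$, then $\mathbf{K}_{\mathbb{M}_2(K[x,x^{-1}])}$ is Lie solvable of index $3$ but not Lie nilpotent. (2) If $\mathrm{char}(K)\neq 2$, then $\mathbf{K}_{\mathbb{M}_2(K[x,x^{-1}])}$ is not Lie solvable.
   Context: Lie bracket $[a,b]=ab-ba$; $[S,T]=\mathrm{span}_K\{ab-ba:a\in S,b\in T\}$. For a Lie subalgebra $\mathcal{L}$: $\mathcal{L}^{(0)}=\mathcal{L}$, $\mathcal{L}^{(n)}=[\mathcal{L}^{(n-1)},\mathcal{L}^{(n-1)}]$; $\mathcal{L}^0=\mathcal{L}$, $\mathcal{L}^n=[\mathcal{L}^{n-1},\mathcal{L}]$. Lie solvable (resp. nilpotent) means $\mathcal{L}^{(n)}=0$ (resp. $\mathcal{L}^n=0$) for some $n$; the index of solvability is the smallest such $n$. *)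

(* Defs.v *)
From HB Require Import structures.
From mathcomp Require Import all_boot all_order all_algebra.
Set Implicit Arguments. Unset Strict Implicit. Unset Printing Implicit Defensive.
Import GRing.Theory.
Local Open Scope ring_scope.

(* The Laurent polynomial algebra K[x,x^{-1}] is realised inside the field of
   rational functions K(x) = {fraction {poly K}} as the subring of the
   elements p(x) / x^n, with p a polynomial and n a natural number. *)

Section Laurent.
Variable K : fieldType.

Definition ratfun := {fraction {poly K}}.

Definition xF : ratfun := tofrac 'X.

Definition cstF (c : K) : ratfun := tofrac (c%:P).

Definition is_laurent (f : ratfun) : Prop :=
  exists (p : {poly K}) (n : nat), f = tofrac p / xF ^+ n.

Definition poly_at_inv (p : {poly K}) : ratfun :=
  (map_poly cstF p).[xF^-1].

Definition sub_inv (f : ratfun) : ratfun :=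
  let r := repr f in poly_at_inv (frac r).1 / poly_at_inv (frac r).2.

Definition mat := 'M[ratfun]_2.

Definition laurent_mx (M : mat) : Prop := forall i j, is_laurent (M i j).

Definition natural (M : mat) : mat := \matrix_(i, j) sub_inv (M j i).

Definition skewK (M : mat) : Prop := laurent_mx M /\ natural M = - M.

Definition lie_bracket_span (S T : mat -> Prop) (M : mat) : Prop :=
  exists s : seq (K * mat * mat),
    (forall t, t \in s -> S t.1.2 /\ T t.2) /\
    M = \sum_(t <- s) (cstF t.1.1 *: (t.1.2 * t.2 - t.2 * t.1.2)).

Fixpoint derived (L : mat -> Prop) (n : nat) : mat -> Prop :=
  match n with
  | 0 => L
  | n'.+1 => lie_bracket_span (derived L n') (derived L n')
  end.

Fixpoint lower_central (L : mat -> Prop) (n : nat) : mat -> Prop :=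
  match n with
  | 0 => L
  | n'.+1 => lie_bracket_span (lower_central L n') L
  end.

Definition is_zero_set (S : mat -> Prop) : Prop := forall M, S M -> M = 0.

Definition lie_solvable (L : mat -> Prop) : Prop :=
  exists n, is_zero_set (derived L n).

Definition lie_nilpotent (L : mat -> Prop) : Prop :=
  exists n, is_zero_set (lower_central L n).

Definition lie_solvable_index (L : mat -> Prop) (m : nat) : Prop :=
  is_zero_set (derived L m) /\ forall n, (n < m)%N -> ~ is_zero_set (derived L n).

End Laurent.

(* Main.v *)
Require Import Defs.
From HB Require Import structures.
From mathcomp Require Import all_boot all_order all_algebra generic_quotient fraction.
From mathcomp Require Import zify ring.
Set Implicit Arguments. Unset Strict Implicit. Unset Printing Implicit Defensive.
Import GRing.Theory.
Local Open Scope ring_scope. Local Open Scope quotient_scope.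
Section S.
Variable K : fieldType.
Local Notation F := (ratfun K).
Lemma pi_den (r : {ratio {poly K}}) :
  (\pi_F r : F) * tofrac (frac r).2 = tofrac (frac r).1.
Proof.
unlock FracField.tofrac. rewrite -[LHS]FracField.pi_mul. apply/eqmodP.
rewrite /= FracField.equivfE /FracField.mulf /= !numden_Ratio ?oner_neq0 ?mulf_neq0 ?denom_ratioP ?oner_neq0 //.
by rewrite !mulr1 mulrC.
Qed.
Lemma frac_repr (f : F) : f = tofrac (frac (repr f)).1 / tofrac (frac (repr f)).2.
Proof.
have d0 : tofrac (frac (repr f)).2 != 0 :> F by rewrite tofrac_eq0 denom_ratioP.
by rewrite -pi_den reprK mulfK.
Qed.
Definition pai : {rmorphism {poly K} -> F} := horner_eval (xF K)^-1 \o map_poly (@tofrac _ \o polyC).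
Lemma paiE p : poly_at_inv p = pai p.
Proof. by []. Qed.
Lemma xF_neq0 : xF K != 0.
Proof. by rewrite /xF tofrac_eq0 polyX_eq0. Qed.

Lemma pai_X : pai 'X = (xF K)^-1.
Proof. by rewrite /= map_polyX horner_evalE hornerX. Qed.
Lemma pai_C c : pai c%:P = cstF c.
Proof. by rewrite /= map_polyC horner_evalE hornerC. Qed.

Lemma pai_neq0 q : q != 0 -> pai q != 0.
Proof.
move=> q0; set m := size q.
set r : {poly K} := \sum_(i < m) q`_i *: 'X^(m - i).
have E : pai q * (xF K) ^+ m = tofrac r.
  rewrite /= horner_evalE (horner_coef_wide _ (eq_leq (size_map_poly _ _))).
  rewrite /r rmorph_sum mulr_suml; apply: eq_bigr => i _.
  rewrite -mul_polyC rmorphM /= rmorphXn /= coef_map /=.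
  have -> : xF K ^+ m = xF K ^+ (m - i) * xF K ^+ i by rewrite -exprD subnK // ltnW.
  rewrite -mulrA; congr (_ * _).
  by rewrite mulrCA exprVn mulVf ?mulr1 // expf_neq0 // xF_neq0.
have m0 : (0 < m)%N by rewrite lt0n size_poly_eq0.
have r0 : r != 0.
  have hm : (m.-1 < m)%N by rewrite ltn_predL.
  apply/eqP=> /(congr1 (fun p : {poly K} => p`_1)).
  rewrite coef_sumMXn coef0 (bigD1 (Ordinal hm)) /=; last by apply/eqP; lia.
  rewrite big1 ?addr0.
    by move=> /eqP; rewrite -lead_coefE lead_coef_eq0 (negbTE q0).
  move=> i /andP[/eqP hi ne]; case/eqP: ne; apply: val_inj => /=; lia.
apply/eqP=> h; move: E; rewrite h mul0r => /esym/eqP.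
by rewrite tofrac_eq0 (negbTE r0).
Qed.

Lemma sub_inv_frac p q : q != 0 ->
  sub_inv (tofrac p / tofrac q : F) = pai p / pai q.
Proof.
move=> q0; rewrite /sub_inv.
set f := (tofrac p / tofrac q : F).
have d0 := denom_ratioP (repr f).
have := frac_repr f; rewrite {2}/f => /eqP.
rewrite eqr_div ?tofrac_eq0 // -!rmorphM /= tofrac_eq => /eqP h.
rewrite !paiE; apply/eqP; rewrite eqr_div ?pai_neq0 //.
by rewrite -!rmorphM /= h.
Qed.

Lemma sub_invL p n : sub_inv (tofrac p / xF K ^+ n) = pai p * xF K ^+ n.
Proof.
rewrite {1}/xF -rmorphXn sub_inv_frac ?expf_neq0 ?polyX_eq0 //.
rewrite (rmorphXn pai) pai_X exprVn invrK rmorphXn.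
by [].
Qed.
Local Notation mat := (mat K).
Definition mk2 (a b c d : F) : mat :=
  \matrix_(i < 2, j < 2) if i == 0 then (if j == 0 then a else b) else (if j == 0 then c else d).

Lemma mk2E (M : mat) : M = mk2 (M 0 0) (M 0 1) (M 1 0) (M 1 1).
Proof.
apply/matrixP => i j; rewrite mxE.
by case: i => [[|[|?]] ?]; case: j => [[|[|?]] ?] //=; congr (M _ _); apply: val_inj.
Qed.

Lemma mul2E (A B : mat) i j : (A * B) i j = A i 0 * B 0 j + A i 1 * B 1 j.
Proof. rewrite -mulmxE !mxE !big_ord_recl big_ord0 addr0. by congr (A i _ * B _ j + A i _ * B _ j); apply: val_inj. Qed.

Lemma mk2_mul a b c d a' b' c' d' :
  mk2 a b c d * mk2 a' b' c' d' =
  mk2 (a*a'+b*c') (a*b'+b*d') (c*a'+d*c') (c*b'+d*d').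
Proof.
apply/matrixP => i j; rewrite mul2E !mxE.
by case: i => [[|[|?]] ?]; case: j => [[|[|?]] ?].
Qed.

Lemma mk2_add a b c d a' b' c' d' :
  mk2 a b c d + mk2 a' b' c' d' = mk2 (a+a') (b+b') (c+c') (d+d').
Proof.
apply/matrixP => i j; rewrite !mxE.
by case: i => [[|[|?]] ?]; case: j => [[|[|?]] ?].
Qed.

Lemma mk2_opp a b c d : - mk2 a b c d = mk2 (-a) (-b) (-c) (-d).
Proof.
apply/matrixP => i j; rewrite !mxE.
by case: i => [[|[|?]] ?]; case: j => [[|[|?]] ?].
Qed.

Lemma mk2_scale k a b c d : k *: mk2 a b c d = mk2 (k*a) (k*b) (k*c) (k*d).
Proof.
apply/matrixP => i j; rewrite !mxE.
by case: i => [[|[|?]] ?]; case: j => [[|[|?]] ?].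
Qed.

Lemma mk2_0 : mk2 0 0 0 0 = 0.
Proof.
apply/matrixP => i j; rewrite !mxE.
by case: i => [[|[|?]] ?]; case: j => [[|[|?]] ?].
Qed.

Lemma natural_mk2 a b c d :
  natural (mk2 a b c d) = mk2 (sub_inv a) (sub_inv c) (sub_inv b) (sub_inv d).
Proof.
apply/matrixP => i j; rewrite !mxE.
by case: i => [[|[|?]] ?]; case: j => [[|[|?]] ?].
Qed.

Lemma mk2_00 a b c d : mk2 a b c d 0 0 = a. Proof. by rewrite mxE. Qed.
Lemma mk2_01 a b c d : mk2 a b c d 0 1 = b. Proof. by rewrite mxE. Qed.
Lemma mk2_10 a b c d : mk2 a b c d 1 0 = c. Proof. by rewrite mxE. Qed.
Lemma mk2_11 a b c d : mk2 a b c d 1 1 = d. Proof. by rewrite mxE. Qed.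

Lemma comm_mk2 a b c d a' b' c' d' :
  mk2 a b c d * mk2 a' b' c' d' - mk2 a' b' c' d' * mk2 a b c d =
  mk2 (b*c' - b'*c) (a*b'+b*d' - (a'*b+b'*d)) (c*a'+d*c' - (c'*a+d'*c)) (c*b' - c'*b).
Proof.
rewrite !mk2_mul mk2_opp mk2_add; congr mk2; ring.
Qed.
Definition cstM : {rmorphism K -> F} := (@tofrac _ \o polyC).
Lemma cstFE c : cstF c = cstM c. Proof. by []. Qed.

Lemma sub_invE f p n : f = tofrac p / xF K ^+ n -> sub_inv f = pai p * xF K ^+ n.
Proof. by move=> ->; rewrite sub_invL. Qed.

Lemma laurent0 : is_laurent (0 : F).
Proof. by exists 0, 0%N; rewrite rmorph0 mul0r. Qed.

Lemma laurent_mk2 a b c d : is_laurent a -> is_laurent b -> is_laurent c -> is_laurent d ->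
  laurent_mx (mk2 a b c d).
Proof.
move=> ha hb hc hd i j; rewrite mxE.
by case: i => [[|[|?]] ?]; case: j => [[|[|?]] ?].
Qed.

Lemma sub_inv0 : sub_inv (0 : F) = 0.
Proof. by rewrite (@sub_invE _ 0 0) ?rmorph0 ?mul0r. Qed.

Lemma span1 (S T : mat -> Prop) A B : S A -> T B -> lie_bracket_span S T (A * B - B * A).
Proof.
move=> hA hB; exists [:: (1, A, B)]; split.
  by move=> t; rewrite inE => /eqP ->.
by rewrite big_seq1 /= cstFE rmorph1 scale1r.
Qed.

Lemma span_ind (S T : mat -> Prop) (Pr : mat -> Prop) :
  Pr 0 -> (forall A B, Pr A -> Pr B -> Pr (A + B)) ->
  (forall k A B, S A -> T B -> Pr (cstF k *: (A * B - B * A))) ->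
  forall M, @lie_bracket_span K S T M -> Pr M.
Proof.
move=> h0 hD hT M [s [hs ->]]; elim: s hs => [|t s IH] hs; first by rewrite big_nil.
rewrite big_cons; apply: hD; last by apply: IH => u us; apply: hs; rewrite inE us orbT.
by case: (hs t (mem_head _ _)) => h1 h2; apply: hT.
Qed.

Definition s : F := xF K - (xF K)^-1.

Lemma sE : s = tofrac ('X^2 - 1) / xF K ^+ 1.
Proof.
rewrite /s rmorphB rmorphXn rmorph1 /= -/(xF K) expr1.
by rewrite mulrBl mul1r expr2 mulfK // xF_neq0.
Qed.
Lemma s_neq0 : s != 0.
Proof.
rewrite sE mulf_eq0 invr_eq0 expf_eq0 (negbTE xF_neq0) andbF orbF tofrac_eq0.
apply/eqP => /(congr1 (fun p : {poly K} => p`_2)).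
by rewrite coefB coefXn coef1 coef0 /= subr0 => /eqP; rewrite oner_eq0.
Qed.

Lemma sXE a : s ^+ a = tofrac (('X^2 - 1) ^+ a) / xF K ^+ a.
Proof. by rewrite sE expr1 expr_div_n rmorphXn. Qed.

Lemma pai_base : pai ('X^2 - 1) * xF K = - s.
Proof.
rewrite rmorphB (rmorphXn pai) rmorph1 pai_X /s.
by rewrite mulrBl mul1r expr2 -mulrA mulVf ?mulr1 ?xF_neq0 // opprB.
Qed.

Lemma sub_inv_sX a : sub_inv (s ^+ a) = (-1) ^+ a * s ^+ a.
Proof.
rewrite (sub_invE (sXE a)) (rmorphXn pai) -exprMn pai_base.
exact: exprNn.
Qed.

Lemma sub_inv_NsX a : sub_inv (- s ^+ a) = - ((-1) ^+ a * s ^+ a).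
Proof.
have e : - s ^+ a = tofrac (- ('X^2 - 1) ^+ a) / xF K ^+ a by rewrite rmorphN /= mulNr -sXE.
rewrite (sub_invE e) rmorphN mulNr.
by rewrite -sub_inv_sX (sub_invE (sXE a)).
Qed.

Lemma laurent_sX a : is_laurent (s ^+ a).
Proof. by exists (('X^2 - 1) ^+ a), a; rewrite sXE. Qed.

Lemma laurent_NsX a : is_laurent (- s ^+ a).
Proof. by exists (- ('X^2 - 1) ^+ a), a; rewrite rmorphN /= mulNr -sXE. Qed.

Lemma two0F (h2 : (2%N \in [pchar K])) : (2%:R : F) = 0.
Proof. by rewrite -(rmorph_nat cstM 2) /= (pcharf0 h2) rmorph0. Qed.

Lemma neg2 (h : (2%:R : F) = 0) (y : F) : - y = y.
Proof.
apply/eqP; rewrite -subr_eq0 -opprD oppr_eq0 -mulr2n -mulr_natr h mulr0 //.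
Qed.

Lemma mx0E (i j : 'I_2) : (0 : mat) i j = 0. Proof. by rewrite mxE. Qed.
Lemma mxDE (A B : mat) (i j : 'I_2) : (A + B) i j = A i j + B i j. Proof. by rewrite mxE. Qed.

Lemma P1_span (h : (2%:R : F) = 0) S T M : @lie_bracket_span K S T M -> M 0 0 = M 1 1.
Proof.
apply: (@span_ind S T (fun M : mat => M 0 0 = M 1 1)).
- by rewrite !mx0E.
- by move=> A B hA hB; rewrite !mxDE hA hB.
move=> k A B _ _; rewrite [A]mk2E [B]mk2E comm_mk2 mk2_scale mk2_00 mk2_11.
by rewrite -[LHS](neg2 h); ring.
Qed.

Lemma P2_span (h : (2%:R : F) = 0) (S T : mat -> Prop) M :
  (forall A, S A -> A 0 0 = A 1 1) -> (forall B, T B -> B 0 0 = B 1 1) ->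
  @lie_bracket_span K S T M -> [/\ M 0 1 = 0, M 1 0 = 0 & M 0 0 = M 1 1].
Proof.
move=> hS hT.
apply: (@span_ind S T (fun M : mat => [/\ M 0 1 = 0, M 1 0 = 0 & M 0 0 = M 1 1])).
- by rewrite !mx0E.
- by move=> A B [hA1 hA2 hA3] [hB1 hB2 hB3]; rewrite !mxDE hA1 hA2 hA3 hB1 hB2 hB3 !addr0.
move=> k A B hA hB; rewrite [A]mk2E [B]mk2E -(hS A hA) -(hT B hB).
rewrite comm_mk2 mk2_scale mk2_00 mk2_11 mk2_01 mk2_10; split; try ring.
by rewrite -[LHS](neg2 h); ring.
Qed.

Lemma zero_span (S T : mat -> Prop) M :
  (forall A, S A -> [/\ A 0 1 = 0, A 1 0 = 0 & A 0 0 = A 1 1]) ->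
  (forall B, T B -> [/\ B 0 1 = 0, B 1 0 = 0 & B 0 0 = B 1 1]) ->
  @lie_bracket_span K S T M -> M = 0.
Proof.
move=> hS hT.
apply: (@span_ind S T (fun M : mat => M = 0)) => //.
- by move=> A B -> ->; rewrite addr0.
move=> k A B hA hB; rewrite [A]mk2E [B]mk2E.
case: (hS A hA) => -> -> ->; case: (hT B hB) => -> -> ->.
by rewrite comm_mk2 mk2_scale -mk2_0; congr mk2; ring.
Qed.

Lemma derived3 (h : (2%:R : F) = 0) (L : mat -> Prop) : is_zero_set (@derived K L 3).
Proof.
move=> M h3; apply: (zero_span _ _ h3) => A hA; apply: (P2_span h _ _ hA) => C hC;
  exact: (P1_span h hC).
Qed.

Lemma sub_inv1 : sub_inv (1 : F) = 1.
Proof. by rewrite (@sub_invE _ 1 0) ?rmorph1 ?expr0 ?mulr1 ?divr1. Qed.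
Lemma sub_invX : sub_inv (xF K) = (xF K)^-1.
Proof. by rewrite (@sub_invE _ 'X 0) ?pai_X ?expr0 ?mulr1 ?divr1. Qed.
Lemma sub_invXV : sub_inv ((xF K)^-1) = xF K.
Proof. by rewrite (@sub_invE _ 1 1) ?rmorph1 ?expr1 ?mul1r ?div1r. Qed.
Lemma laurent1 : is_laurent (1 : F).
Proof. by exists 1, 0%N; rewrite rmorph1 expr0 divr1. Qed.
Lemma laurentX : is_laurent (xF K).
Proof. by exists 'X, 0%N; rewrite expr0 divr1. Qed.
Lemma laurentXV : is_laurent ((xF K)^-1).
Proof. by exists 1, 1%N; rewrite rmorph1 expr1 div1r. Qed.

Lemma mk2_neq0_00 a b c d : a != 0 -> mk2 a b c d != 0.
Proof. by move=> ha; apply/eqP => /(congr1 (fun M : mat => M 0 0)); rewrite mk2_00 mx0E; apply/eqP. Qed.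
Lemma mk2_neq0_01 a b c d : b != 0 -> mk2 a b c d != 0.
Proof. by move=> ha; apply/eqP => /(congr1 (fun M : mat => M 0 1)); rewrite mk2_01 mx0E; apply/eqP. Qed.

Section Char2.
Variable h : (2%:R : F) = 0.
Let Z := mk2 1 0 0 0.
Let Xm := mk2 0 1 1 0.
Let Y := mk2 0 (xF K) (xF K)^-1 0.

Lemma skewZ : skewK Z.
Proof.
split; first by apply: laurent_mk2; first [exact: laurent0 | exact: laurent1].
by rewrite natural_mk2 mk2_opp sub_inv0 sub_inv1 !(neg2 h).
Qed.
Lemma skewXm : skewK Xm.
Proof.
split; first by apply: laurent_mk2; first [exact: laurent0 | exact: laurent1].
by rewrite natural_mk2 mk2_opp sub_inv0 sub_inv1 !(neg2 h).
Qed.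
Lemma skewY : skewK Y.
Proof.
split; first by apply: laurent_mk2; first [exact: laurent0 | exact: laurentX | exact: laurentXV].
by rewrite natural_mk2 mk2_opp sub_inv0 sub_invX sub_invXV !(neg2 h).
Qed.

Lemma lower_bounds n : (n < 3)%N -> ~ is_zero_set (@derived K (@skewK K) n).
Proof.
have e1 : Z * Xm - Xm * Z = mk2 0 1 (-1) 0 by rewrite comm_mk2; congr mk2; ring.
have e2 : Z * Y - Y * Z = mk2 0 (xF K) (- (xF K)^-1) 0 by rewrite comm_mk2; congr mk2; ring.
have d1 : @derived K (@skewK K) 1 (mk2 0 1 (-1) 0).
  by rewrite -e1; apply: span1; [exact: skewZ | exact: skewXm].
have d1' : @derived K (@skewK K) 1 (mk2 0 (xF K) (- (xF K)^-1) 0).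
  by rewrite -e2; apply: span1; [exact: skewZ | exact: skewY].
case: n => [_|[_|[_|//]]] hz.
- by move: (hz _ skewZ); apply/eqP; apply: mk2_neq0_00; rewrite oner_neq0.
- by move: (hz _ d1); apply/eqP; apply: mk2_neq0_01; rewrite oner_neq0.
have := hz _ (span1 d1 d1'); rewrite comm_mk2; apply/eqP; apply: mk2_neq0_00.
have -> : 1 * - (xF K)^-1 - xF K * -1 = s by rewrite /s; ring.
exact: s_neq0.
Qed.

Lemma Xm_lc n : @lower_central K (@skewK K) n Xm.
Proof.
elim: n => [|n IH]; first exact: skewXm.
have e : Xm * Z - Z * Xm = Xm.
  rewrite comm_mk2; congr mk2; try ring.
  by rewrite -(neg2 h 1); ring.
by rewrite -e; apply: span1 => //; exact: skewZ.
Qed.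

Lemma not_nil : ~ lie_nilpotent (@skewK K).
Proof.
case=> n hn; move: (hn _ (Xm_lc n)); apply/eqP; apply: mk2_neq0_01; exact: oner_neq0.
Qed.
End Char2.

Section CharN2.
Variable h2K : (2%:R : K) != 0.

Lemma h2F : (2%:R : F) != 0.
Proof. by rewrite -(rmorph_nat cstM 2) /= tofrac_eq0 polyC_eq0. Qed.

Definition Jk a := mk2 0 (s ^+ a) (- s ^+ a) 0.
Definition Pk a := mk2 (s ^+ a) 0 0 (- s ^+ a).
Definition Qk a := mk2 0 (s ^+ a) (s ^+ a) 0.

Lemma brJQ a b : Jk a * Qk b - Qk b * Jk a = 2%:R *: Pk (a + b).
Proof. by rewrite comm_mk2 mk2_scale exprD; congr mk2; ring. Qed.
Lemma brPQ a b : Pk a * Qk b - Qk b * Pk a = 2%:R *: Jk (a + b).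
Proof. by rewrite comm_mk2 mk2_scale exprD; congr mk2; ring. Qed.
Lemma brPJ a b : Pk a * Jk b - Jk b * Pk a = 2%:R *: Qk (a + b).
Proof. by rewrite comm_mk2 mk2_scale exprD; congr mk2; ring. Qed.

Lemma span_half (S T : mat -> Prop) A B C : S A -> T B ->
  A * B - B * A = 2%:R *: C -> @lie_bracket_span K S T C.
Proof.
move=> hA hB e; exists [:: ((2%:R)^-1, A, B)]; split.
  by move=> t; rewrite inE => /eqP ->.
rewrite big_seq1 /= e scalerA cstFE -(rmorph_nat cstM 2) -rmorphM mulVf //.
by rewrite rmorph1 scale1r.
Qed.

Lemma skewJ k : skewK (Jk k.*2).
Proof.
split; first by apply: laurent_mk2; first [exact: laurent0 | exact: laurent_sX | exact: laurent_NsX].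
rewrite natural_mk2 mk2_opp sub_inv0 sub_inv_sX sub_inv_NsX -signr_odd odd_double expr0 !mul1r.
by congr mk2; rewrite ?oppr0 ?opprK.
Qed.
Lemma skewP k : skewK (Pk k.*2.+1).
Proof.
split; first by apply: laurent_mk2; first [exact: laurent0 | exact: laurent_sX | exact: laurent_NsX].
rewrite natural_mk2 mk2_opp sub_inv0 sub_inv_sX sub_inv_NsX -signr_odd /= odd_double /= expr1 !mulN1r.
by congr mk2; rewrite ?oppr0 ?opprK.
Qed.
Lemma skewQ k : skewK (Qk k.*2.+1).
Proof.
split; first by apply: laurent_mk2; first [exact: laurent0 | exact: laurent_sX | exact: laurent_NsX].
rewrite natural_mk2 mk2_opp sub_inv0 sub_inv_sX -signr_odd /= odd_double /= expr1 !mulN1r.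
by congr mk2; rewrite ?oppr0 ?opprK.
Qed.

Lemma inv_derived n : exists m, forall k, (m <= k)%N ->
  [/\ @derived K (@skewK K) n (Jk k.*2),
      @derived K (@skewK K) n (Pk k.*2.+1) & @derived K (@skewK K) n (Qk k.*2.+1)].
Proof.
elim: n => [|n [m IH]].
  by exists 0%N => k _; split; [exact: skewJ | exact: skewP | exact: skewQ].
exists m.*2.+1 => k hk.
have hm := IH m (leqnn m).
case: hm => hJm hPm hQm.
have e1 : (m.*2.+1 + (k - m.+1).*2.+1 = k.*2)%N by lia.
have e2 : (m.*2 + (k - m).*2.+1 = k.*2.+1)%N by lia.
have e3 : ((k - m).*2.+1 + m.*2 = k.*2.+1)%N by lia.
case: (IH (k - m.+1)%N) => [|_ _ hQ1]; first by lia.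
case: (IH (k - m)%N) => [|_ hP2 hQ2]; first by lia.
split.
- by apply: (span_half hPm hQ1); rewrite brPQ e1.
- by apply: (span_half hJm hQ2); rewrite brJQ e2.
- by apply: (span_half hP2 hJm); rewrite brPJ e3.
Qed.

Lemma not_solv : ~ lie_solvable (@skewK K).
Proof.
case=> n hn; case: (inv_derived n) => m hm; case: (hm m (leqnn m)) => hJ _ _.
move: (hn _ hJ); apply/eqP; apply: mk2_neq0_01; exact: expf_neq0 s_neq0.
Qed.
End CharN2.
End S.

Theorem corollary3p3 (K : fieldType) :
  ((2%N \in [pchar K]) ->
     lie_solvable_index (@skewK K) 3 /\ ~ lie_nilpotent (@skewK K)) /\
  (~ (2%N \in [pchar K]) -> ~ lie_solvable (@skewK K)).
Proof.
split.
  move=> h2; have h := two0F h2.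
  split; last exact: not_nil.
  by split; [apply: derived3 | apply: lower_bounds].

move=> h; apply: not_solv; apply/eqP => e; apply: h.
by rewrite inE /= e eqxx.
Qed.
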